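(* Let $N=[n]$, let $v:2^N\to\mathbb{R}_+$ be a monotone submodular valuation with $v(\emptyset)=0$, and let $X$ be a decision map for $v$. Then for any pure Nash equilibrium $p$ of the pricing game defined by $v$ and $X$, we have $p_i\ge v(\{i\}\mid N\setminus\{i\})$ for every $i\in N$. Moreover, if $S=X(p)$ and $i\notin S$, then $v(\{i\}\mid S)=0$.
   Context: Pricing game: $N=[n]$ services, service $i$ controlled by seller $i$. Buyer valuation $v:2^N\to\mathbb{R}_+$, monotone, $v(\emptyset)=0$; submodular means $v(S\cup T)+v(S\cap T)\le v(S)+v(T)$ for all $S,T$. Marginal value: $v(T\mid S)=v(S\cup T)-v(S)$. For $p\in\mathbb{R}^n_+$, $p(S)=\sum_{j\in S}p_j$, $D(v;p)=\arg\max_{S\subseteq N}(v(S)-p(S))$. A decision map is $X:\mathbb{R}^n_+\to2^N$ with $X(p)\in D(v;p)$ for all $p$. Seller $i$'s utility is $u_i(p)=p_i\mathbf{1}\{i\in X(p)\}$; a pure Nash equilibrium is a $p$ with $u_i(p)\ge u_i(p_i',p_{-i})$ for all $i$ and $p_i'\in\mathbb{R}_+$. *)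

(* Defs.v *)
From mathcomp Require Import all_boot all_order all_algebra.
Set Implicit Arguments. Unset Strict Implicit. Unset Printing Implicit Defensive.
Import Order.TTheory GRing.Theory Num.Theory.
Local Open Scope ring_scope.

(* Services are 'I_n; bundles are {set 'I_n}; a price vector is p : 'I_n -> R
   (nonnegativity imposed separately via [nonneg_prices]). *)

Section Pricing.
Variables (R : realFieldType) (n : nat).
Implicit Types (v : {set 'I_n} -> R) (p : 'I_n -> R) (S T : {set 'I_n}).

Definition nonneg_valuation v := forall S, 0 <= v S.
Definition monotone v := forall S T, S \subset T -> v S <= v T.
Definition submodular v := forall S T, v (S :|: T) + v (S :&: T) <= v S + v T.

(* marginal value v(T | S) = v(S u T) - v(S) *)
Definition marg v T S := v (S :|: T) - v S.

Definition price_of p S := \sum_(j in S) p j.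

Definition nonneg_prices p := forall i, 0 <= p i.

Definition in_demand v p S := forall T, v T - price_of p T <= v S - price_of p S.

Definition decision_map v (X : ('I_n -> R) -> {set 'I_n}) :=
  forall p, nonneg_prices p -> in_demand v p (X p).

Definition deviate p (i : 'I_n) (q : R) : 'I_n -> R :=
  fun j => if j == i then q else p j.

Definition seller_utility (X : ('I_n -> R) -> {set 'I_n}) p (i : 'I_n) : R :=
  if i \in X p then p i else 0.

Definition pure_NE (X : ('I_n -> R) -> {set 'I_n}) p :=
  nonneg_prices p /\
  forall i q, 0 <= q -> seller_utility X (deviate p i q) i <= seller_utility X p i.

End Pricing.

(* Main.v *)
Require Import Defs.
From mathcomp Require Import all_boot all_order all_algebra.
From mathcomp Require Import ring lra.
Import Order.TTheory GRing.Theory Num.Theory.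
Local Open Scope ring_scope.

Lemma price_dev (R : realFieldType) (n : nat) (p : 'I_n -> R) (i : 'I_n) (q : R) (T : {set 'I_n}) :
  i \notin T -> price_of (deviate p i q) T = price_of p T.
Proof.
move=> iT; apply: eq_bigr => j jT; rewrite /deviate.
case: eqP => // ji; by rewrite -ji jT in iT.
Qed.

Lemma price_add (R : realFieldType) (n : nat) (p : 'I_n -> R) (i : 'I_n) (T : {set 'I_n}) :
  i \notin T -> price_of p (i |: T) = p i + price_of p T.
Proof. by move=> iT; rewrite /price_of big_setU1. Qed.

Lemma in_X (R : realFieldType) (n : nat) (v : {set 'I_n} -> R) (X : ('I_n -> R) -> {set 'I_n}) (p' : 'I_n -> R) (i : 'I_n) :
  decision_map v X -> nonneg_prices p' ->
  (forall T : {set 'I_n}, i \notin T -> exists U : {set 'I_n}, v T - price_of p' T < v U - price_of p' U) ->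
  i \in X p'.
Proof.
move=> dX np H; apply/negPn/negP => iX.
have [U HU] := H _ iX.
have := dX _ np U; rewrite leNgt HU //.
Qed.

Lemma nonneg_dev (R : realFieldType) (n : nat) (p : 'I_n -> R) (i : 'I_n) (q : R) :
  nonneg_prices p -> 0 <= q -> nonneg_prices (deviate p i q).
Proof. by move=> np hq j; rewrite /deviate; case: eqP. Qed.

Theorem mainTheorem5 (R : realFieldType) (n : nat)
  (v : {set 'I_n} -> R) (X : ('I_n -> R) -> {set 'I_n}) (p : 'I_n -> R) :
  nonneg_valuation v -> v set0 = 0 -> monotone v -> submodular v ->
  decision_map v X ->
  pure_NE X p ->
  (forall i : 'I_n, marg v [set i] (~: [set i]) <= p i) /\
  (forall i : 'I_n, i \notin X p -> marg v [set i] (X p) = 0).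
Proof.
move=> nv v0 mon sub dX [np NE]; split.
- move=> i; set m := marg v [set i] (~: [set i]).
  rewrite leNgt; apply/negP => hlt.
  set q := (p i + m) / 2.
  have hq1 : p i < q by rewrite /q ltr_pdivlMr // mulr2n mulrDr mulr1 ltrD2l.
  have hq2 : q < m by rewrite /q ltr_pdivrMr // mulrDr mulr1 ltrD2r.
  have q0 : 0 <= q by apply: le_trans (ltW hq1).
  have npd := @nonneg_dev _ _ p i q np q0.
  have iX : i \in X (deviate p i q).
    apply: (@in_X _ _ v X _ i dX npd) => T iT; exists (i |: T).
    rewrite price_add //= price_dev // /deviate eqxx.
    have hm : m <= v (i |: T) - v T.
      have := sub (i |: T) (~: [set i]).
      have -> : (i |: T) :|: ~: [set i] = setT.
        apply/setP => j; rewrite !inE; by case: (j == i); rewrite /= ?orbT ?andbT.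
      have -> : (i |: T) :&: ~: [set i] = T.
        apply/setP => j; rewrite !inE; case: eqP => [->|_] /=; rewrite ?(negbTE iT) ?andbT //.
      have em : m = v setT - v (~: [set i]).
        rewrite /m /marg; congr (v _ - _); apply/setP => k; rewrite !inE; by case: (k == i); rewrite /= ?orbT ?andbT.
      move=> h; clearbody m; lra.
    have : q < v (i |: T) - v T by apply: lt_le_trans hm.
    move=> h; rewrite -subr_gt0; rewrite -subr_gt0 in h.
    by have -> : v (i |: T) - (q + price_of p T) - (v T - price_of p T) = v (i |: T) - v T - q by ring.
  have := NE i q q0; rewrite /seller_utility iX /deviate eqxx.
  case: (i \in X p); last by rewrite leNgt (le_lt_trans (np i) hq1).
  by rewrite leNgt hq1.
- move=> i iS; set S := X p; set d := marg v [set i] S.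
  have d0 : 0 <= d by rewrite /d /marg subr_ge0; apply: mon; apply: subsetUl.
  apply/eqP; rewrite eq_le d0 andbT leNgt; apply/negP => dpos.
  set q := d / 2.
  have q0 : 0 < q by rewrite /q divr_gt0.
  have hqd : q < d by rewrite /q ltr_pdivrMr // mulr2n mulrDr mulr1 ltrDl.
  have npd := @nonneg_dev _ _ p i q np (ltW q0).
  have iX : i \in X (deviate p i q).
    apply: (@in_X _ _ v X _ i dX npd) => T iT; exists (i |: S).
    rewrite price_add //= !price_dev // /deviate eqxx.
    have hd : v (i |: S) = v S + d by rewrite /d /marg setUC; ring.
    have := dX p np T; rewrite -/S => h.
    clearbody q d; lra.
  have := NE i q (ltW q0); rewrite /seller_utility iX /deviate eqxx -/S (negbTE iS).
  by rewrite leNgt q0.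
Qed.
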